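(* Let $\mu,P$ be Borel probability measures on $\mathbb{R}^d$ absolutely continuous w.r.t. Lebesgue measure, let $u\in\mathbb{R}^d$, let $v_u\in\arg\min_{v\in\mathcal{S}^{d-1}}\mu(\{y:\langle y-u,v\rangle\geq0\})$, and for $k\in\mathbb{N}$ let $Q_k$ be the uniform (Lebesgue) distribution on the ball $kv_u+\mathbb{B}$. Then for every $\varepsilon\in(0,1)$ with $\varepsilon>\mathrm{TD}(u;\mu)>0$, if for each $k$, $\partial\varphi_{\varepsilon,k}$ is the subdifferential of any lower semicontinuous convex function $\varphi_{\varepsilon,k}$ whose gradient pushes $\mu$ forward to $P+\varepsilon(Q_k-P)$, then $$\inf_{y\in\partial\varphi_{\varepsilon,k}(u)}\|y\|\to+\infty\quad\text{as }k\to\infty.$$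
   Context: $\mathbb{B}=\{x:\|x\|\leq1\}$; $\mathrm{TD}(u;\mu)=\min_{v\in\mathcal{S}^{d-1}}\mu(\{z:\langle v,z-u\rangle\geq0\})$; $\partial\psi(u)=\{x:\psi(z)\geq\psi(u)+\langle x,z-u\rangle\ \forall z\}$. *)

(* Defs.v *)
From HB Require Import structures.
From mathcomp Require Import all_boot all_order all_algebra.
From mathcomp Require Import all_classical all_reals all_analysis.
Set Implicit Arguments. Unset Strict Implicit. Unset Printing Implicit Defensive.
Import Order.TTheory GRing.Theory Num.Theory.
Import numFieldNormedType.Exports.
Local Open Scope classical_set_scope.
Local Open Scope ring_scope.

Definition dotv (R : realType) (d : nat) (x y : 'rV[R]_d) : R :=
  \sum_(i < d) x 0 i * y 0 i.
Definition enorm (R : realType) (d : nat) (x : 'rV[R]_d) : R :=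
  Num.sqrt (dotv x x).

Definition sphere (R : realType) (d : nat) : set 'rV[R]_d :=
  [set v | enorm v = 1].
Definition cball (R : realType) (d : nat) (c : 'rV[R]_d) (r : R) : set 'rV[R]_d :=
  [set x | enorm (x - c) <= r].

(* Borel sigma-algebra on R^d: generated by the open sets (the topology of
   'rV[R]_d is the product/Euclidean topology). *)
Definition Borel (R : realType) (d : nat) :=
  g_sigma_algebraType (@open 'rV[R]_d).

Definition box (R : realType) (d : nat) (a b : 'rV[R]_d) : set 'rV[R]_d :=
  [set x | forall i, a 0 i <= x 0 i <= b 0 i].
Definition boxvol (R : realType) (d : nat) (a b : 'rV[R]_d) : R :=
  \prod_(i < d) Num.max 0 (b 0 i - a 0 i).
Definition lebesgue_outer (R : realType) (d : nat) (A : set 'rV[R]_d) : \bar R :=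
  ereal_inf [set s : \bar R | exists a b : nat -> 'rV[R]_d,
    A `<=` \bigcup_n box (a n) (b n) /\
    s = (\sum_(0 <= n <oo) (boxvol (a n) (b n))%:E)%E].

Definition unit_ball_vol (R : realType) (d : nat) : R :=
  fine (lebesgue_outer (cball (0 : 'rV[R]_d) 1)).

Definition unif_ball (R : realType) (d : nat) (c : 'rV[R]_d) (A : set 'rV[R]_d)
  : \bar R :=
  (lebesgue_outer (A `&` cball c 1) * (@unit_ball_vol R d)^-1%:E)%E.

Definition abs_cont_leb (R : realType) (d : nat)
  (mu : probability (Borel R d) R) : Prop :=
  forall A : set (Borel R d), measurable A ->
    lebesgue_outer (A : set 'rV[R]_d) = 0%E -> mu A = 0%E.

Definition halfspace (R : realType) (d : nat) (u v : 'rV[R]_d) : set 'rV[R]_d :=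
  [set z | 0 <= dotv v (z - u)].

Definition tukey_depth (R : realType) (d : nat) (u : 'rV[R]_d)
  (mu : probability (Borel R d) R) : \bar R :=
  ereal_inf [set mu (halfspace u v : set (Borel R d)) | v in @sphere R d].

Definition convex_fun (R : realType) (d : nat) (phi : 'rV[R]_d -> \bar R) : Prop :=
  (forall x, phi x != -oo%E) /\
  forall (x y : 'rV[R]_d) (t : R), 0 < t < 1 ->
    (phi (t *: x + (1 - t) *: y)%R <= t%:E * phi x + (1 - t)%:E * phi y)%E.
Definition lsc_fun (R : realType) (d : nat) (phi : 'rV[R]_d -> \bar R) : Prop :=
  forall a : R, open [set x | (a%:E < phi x)%E].

Definition subdiff (R : realType) (d : nat) (phi : 'rV[R]_d -> \bar R)
  (u : 'rV[R]_d) : set 'rV[R]_d :=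
  [set x | forall z, (phi u + (dotv x (z - u))%:E <= phi z)%E].

Definition has_gradient (R : realType) (d : nat) (phi : 'rV[R]_d -> \bar R)
  (x g : 'rV[R]_d) : Prop :=
  forall e : R, 0 < e -> exists2 delta : R, 0 < delta &
    forall h : 'rV[R]_d, enorm h < delta ->
      phi (x + h) \is a fin_num /\
      `| fine (phi (x + h)) - fine (phi x) - dotv g h | <= e * enorm h.

(* the gradient of phi pushes mu forward to the Borel set function nu:
   there is a Borel map T equal to grad phi mu-a.e. with T#mu = nu *)
Definition grad_pushforward (R : realType) (d : nat) (phi : 'rV[R]_d -> \bar R)
  (mu : probability (Borel R d) R) (nu : set 'rV[R]_d -> \bar R) : Prop :=
  exists T : Borel R d -> Borel R d,
    measurable_fun setT T /\
    {ae mu, forall x : Borel R d, has_gradient phi x (T x)} /\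
    forall A : set (Borel R d), measurable A ->
      mu (T @^-1` A) = nu A.

(* Main.v *)
Require Import Defs.
From HB Require Import structures.
From mathcomp Require Import all_boot all_order all_algebra.
From mathcomp Require Import all_classical all_reals all_analysis.
From mathcomp Require Import lra.
Import Order.TTheory GRing.Theory Num.Theory.
Import numFieldNormedType.Exports.
Local Open Scope classical_set_scope.
Local Open Scope ring_scope.

Section H.
Variables (R : realType) (d : nat).

Lemma cont_sum (I : Type) (r : seq I) (f : I -> 'rV[R]_d -> R) :
  (forall i, continuous (f i)) -> continuous (fun z => \sum_(i <- r) f i z).
Proof.
move=> fc; elim: r => [|a r IH].
  under eq_fun do rewrite big_nil; exact: cst_continuous.
under eq_fun do rewrite big_cons.
by move=> z; apply: continuousD; [exact: fc|exact: IH].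
Qed.

Lemma cont_dot (v c : 'rV[R]_d) : continuous (fun z : 'rV[R]_d => dotv v (z - c)).
Proof.
have -> : (fun z : 'rV[R]_d => dotv v (z - c)) = (fun z : 'rV[R]_d => \sum_(i < d) (v 0 i * (z 0 i - c 0 i))).
  by apply: funext => z; apply: eq_bigr => i _; rewrite !mxE.
apply: (@cont_sum _ _ (fun i z => v 0 i * (z 0 i - c 0 i))) => i.
move=> z; apply: (@continuousM _ _ (fun _ => v 0 i) (fun z : 'rV[R]_d => z 0 i - c 0 i)); first exact: cst_continuous.
apply: (@continuousB _ _ _ (fun z : 'rV[R]_d => z 0 i) (fun _ => c 0 i)); [exact: coord_continuous| exact: cst_continuous].
Qed.

Lemma cont_dot2 (c : 'rV[R]_d) : continuous (fun z : 'rV[R]_d => dotv (z - c) (z - c)).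
Proof.
have -> : (fun z : 'rV[R]_d => dotv (z - c) (z - c)) = (fun z : 'rV[R]_d => \sum_(i < d) ((z 0 i - c 0 i) * (z 0 i - c 0 i))).
  by apply: funext => z; apply: eq_bigr => i _; rewrite !mxE.
apply: (@cont_sum _ _ (fun i z => (z 0 i - c 0 i) * (z 0 i - c 0 i))) => i.
move=> z; apply: (@continuousM _ _ (fun z : 'rV[R]_d => z 0 i - c 0 i) (fun z : 'rV[R]_d => z 0 i - c 0 i));
 apply: (@continuousB _ _ _ (fun z : 'rV[R]_d => z 0 i) (fun _ => c 0 i)); (exact: coord_continuous || exact: cst_continuous).
Qed.

Lemma closed_meas (A : set 'rV[R]_d) : closed A -> measurable (A : set (Borel R d)).
Proof.
move=> cA; rewrite -[A]setCK; apply: sigma_algebraC; apply: sub_sigma_algebra.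
by rewrite openC.
Qed.

Lemma meas_half (u v : 'rV[R]_d) : measurable (halfspace u v : set (Borel R d)).
Proof.
apply: closed_meas; rewrite /halfspace.
have := proj1 (continuous_closedP _) (cont_dot v u) _ (@closed_ge R 0).
by [].
Qed.

Lemma meas_cball (c : 'rV[R]_d) : measurable (cball c 1 : set (Borel R d)).
Proof.
apply: closed_meas.
have -> : cball c 1 = (fun z => dotv (z - c) (z - c)) @^-1` [set x | x <= 1].
  rewrite /cball /enorm; apply/seteqP; split => z /=;
  have h0 : 0 <= dotv (z - c) (z - c) by apply: sumr_ge0 => i _; exact: sqr_ge0.
  have e : (Num.sqrt (dotv (z - c) (z - c)) <= 1) = (dotv (z - c) (z - c) <= 1).
    by rewrite -[leRHS]sqrtr1 ler_sqrt.
  by rewrite e.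
  have e : (Num.sqrt (dotv (z - c) (z - c)) <= 1) = (dotv (z - c) (z - c) <= 1).
    by rewrite -[leRHS]sqrtr1 ler_sqrt.
  by rewrite e.
have := proj1 (continuous_closedP _) (cont_dot2 c) _ (@closed_le R 1).
by [].
Qed.
Implicit Types (a b z : 'rV[R]_d).

Lemma dotvDl a b z : dotv (a + b) z = dotv a z + dotv b z.
Proof. by rewrite /dotv -big_split; apply: eq_bigr => i _; rewrite mxE mulrDl. Qed.
Lemma dotvZl (r : R) a z : dotv (r *: a) z = r * dotv a z.
Proof. by rewrite /dotv mulr_sumr; apply: eq_bigr => i _; rewrite mxE mulrA. Qed.
Lemma dotvNr a z : dotv a (- z) = - dotv a z.
Proof. by rewrite /dotv -sumrN; apply: eq_bigr => i _; rewrite mxE mulrN. Qed.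
Lemma dotvZr (r : R) a z : dotv a (r *: z) = r * dotv a z.
Proof. by rewrite /dotv mulr_sumr; apply: eq_bigr => i _; rewrite mxE mulrCA. Qed.
Lemma dotv_ge0 a : 0 <= dotv a a.
Proof. by apply: sumr_ge0 => i _; exact: sqr_ge0. Qed.
Lemma enormZ (r : R) a : enorm (r *: a) = `|r| * enorm a.
Proof. by rewrite /enorm dotvZl dotvZr mulrA -expr2 sqrtrM ?sqrtr_sqr // sqr_ge0. Qed.
Lemma enorm0 : enorm (0 : 'rV[R]_d) = 0.
Proof. by rewrite -(scale0r (0 : 'rV[R]_d)) enormZ normr0 mul0r. Qed.
Lemma enorm_ge0 a : 0 <= enorm a.
Proof. exact: sqrtr_ge0. Qed.
Lemma coord_le a i : `|a 0 i| <= enorm a.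
Proof.
rewrite -sqrtr_sqr /enorm ler_sqrt ?dotv_ge0 // /dotv (bigD1 i) //= -expr2.
by rewrite lerDl; apply: sumr_ge0 => j _; rewrite -expr2 sqr_ge0.
Qed.
Definition l1 z := \sum_(i < d) `|z 0 i|.
Lemma dot_bound a z : `|dotv a z| <= enorm a * l1 z.
Proof.
rewrite /dotv /l1 mulr_sumr; apply: (le_trans (ler_norm_sum _ _ _)).
by apply: ler_sum => i _; rewrite normrM ler_wpM2r ?coord_le.
Qed.

Lemma mono (phi : 'rV[R]_d -> \bar R) x u g y :
  convex_fun phi -> has_gradient phi x g -> subdiff phi u y ->
  dotv y (x - u) - enorm (u - x) <= dotv g (x - u).
Proof.
move=> [phiNy cvx] hg sy.
have [del del0 hdel] := hg 1 ltr01.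
have := hdel 0; rewrite enorm0 => /(_ del0) [phix _].
rewrite addr0 in phix.
have phiu : phi u \is a fin_num.
  rewrite fin_numE phiNy /=; apply/negP => /eqP pu.
  have := sy x; rewrite pu /= addye // leye_eq => /eqP px.
  by rewrite px in phix.
set n := enorm (u - x).
have n0 : 0 <= n by apply: enorm_ge0.
pose t := Num.min (2^-1) (del / (2 * (n + 1))).
have t0 : 0 < t by rewrite lt_min invr_gt0 ltr0n /= divr_gt0 // mulr_gt0 // ltr_wpDl.
have t1 : t < 1 by rewrite gt_min invf_lt1 ?ltr1n.
have tn : t * n < del.
  apply: (@le_lt_trans _ _ (del / (2 * (n + 1)) * n)).
    by rewrite ler_wpM2r // ge_min lexx orbT.
  rewrite mulrAC ltr_pdivrMr ?mulr_gt0 ?ltr_wpDl //.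
  by rewrite ltr_pM2l //; nra.
set h := t *: (u - x).
have hn : enorm h = t * n by rewrite enormZ gtr0_norm.
have hlt : enorm h < del by rewrite hn.
have [phixh hb] := hdel h hlt.
have eq : t *: u + (1 - t) *: x = x + h.
  by rewrite /h; apply/rowP => i; rewrite !mxE; lra.
have := cvx u x t; rewrite t0 t1 => /(_ isT).
rewrite eq -(fineK phixh) -(fineK phiu) -(fineK phix) -!EFinM -EFinD lee_fin => hc.
have := sy x; rewrite -(fineK phiu) -(fineK phix) -EFinD lee_fin => hs.
move: hb; rewrite /h dotvZr hn mul1r => /ler_normlP [hb1 hb2].
have xu : x - u = - (u - x) by rewrite opprB.
rewrite /h in hc; rewrite xu !dotvNr in hs *.
have : t * (dotv g (u - x) - n - (fine (phi u) - fine (phi x))) <= 0 by lra.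
rewrite pmulr_rle0 //; lra.
Qed.
End H.
Arguments l1 {R d} z.
Arguments dot_bound {R d} a z.
Arguments mono {R d} [phi x u g y].

Theorem mainTheorem7 (R : realType) (d : nat)
  (mu P : probability (Borel R d) R)
  (hmu : abs_cont_leb mu) (hP : abs_cont_leb P)
  (u vu : 'rV[R]_d)
  (hvu_sphere : @sphere R d vu)
  (hvu_argmin : mu (halfspace u vu : set (Borel R d)) = tukey_depth u mu)
  (eps : R) (heps : 0 < eps < 1)
  (hTD : (0 < tukey_depth u mu < eps%:E)%E)
  (phi : nat -> 'rV[R]_d -> \bar R)
  (hphi : forall k : nat,
     convex_fun (phi k) /\ lsc_fun (phi k) /\
     grad_pushforward (phi k) mu
       (fun A : set 'rV[R]_d =>
          (P (A : set (Borel R d))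
           + eps%:E * (unif_ball (k%:R *: vu) A - P (A : set (Borel R d))))%E)) :
  (fun k : nat => ereal_inf [set (enorm y)%:E | y in subdiff (phi k) u])
    @ \oo --> +oo%E.
Proof.
apply/cvgeyPge => A.
apply: contrapT => hnot.
have hk : forall n, exists k, (n <= k)%N /\
    (ereal_inf [set (enorm y)%:E | y in subdiff (phi k) u] < A%:E)%E.
  move=> n; apply: contrapT => hn; apply: hnot; exists n => // k /= nk.
  rewrite leNgt; apply/negP => hlt; apply: hn; by exists k.
have [kf hkf] := choice hk.
have hy : forall n, exists y, subdiff (phi (kf n)) u y /\ enorm y < A.
  move=> n; have [_ /ereal_inf_lt [z [y sy <-]]] := hkf n.
  by rewrite lte_fin => yA; exists y.
have [yf hyf] := choice hy.
have hT : forall k, exists T : Borel R d -> Borel R d,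
    measurable_fun setT T /\
    {ae mu, forall x : Borel R d, has_gradient (phi k) x (T x)} /\
    forall A : set (Borel R d), measurable A ->
      mu (T @^-1` A) = (P A + eps%:E * (unif_ball (k%:R *: vu) A - P A))%E.
  by move=> k; have [_ [_ h]] := hphi k.
have [Tf hTf] := choice hT.
have hN : forall k, exists N : set (Borel R d), [/\ measurable N, mu N = 0%E &
    ~` [set x | has_gradient (phi k) x (Tf k x)] `<=` N].
  by move=> k; have [_ [h _]] := hTf k.
have [Nf hNf] := choice hN.
pose B k := cball (k%:R *: vu) 1.
pose G k : set (Borel R d) := (Tf k @^-1` B k) `\` Nf k.
have mG k : measurable (G k).
  apply: measurableD; last by case: (hNf k).
  rewrite -[X in measurable X]setTI; apply: (proj1 (hTf k)) => //.
  exact: meas_cball.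
have Gge k : (eps%:E <= mu (G k))%E.
  have [mT [_ hpush]] := hTf k.
  have hset := hpush setT measurableT.
  rewrite preimage_setT !probability_setT in hset.
  have hB := hpush (B k) (@meas_cball R d _).
  have eU : unif_ball (k%:R *: vu) (B k) = unif_ball (k%:R *: vu) setT.
    by rewrite /unif_ball setIid setTI.
  rewrite eU in hB.
  have U1 : unif_ball (k%:R *: vu) setT = 1%E.
    move: hset; case: (unif_ball _ _) => [r| |] /=.
    - rewrite -EFinB -EFinM -EFinD => /eqP; rewrite eqe => /eqP h.
      have : eps * (r - 1) = 0 by lra.
      move/eqP; rewrite mulf_eq0 => /orP [|]; first by move: heps => /andP [e0 _] /eqP e; rewrite e ltxx in e0.
      by rewrite subr_eq0 => /eqP ->.
    - rewrite addye // mulry gtr0_sg ?mul1e ?addey //; by case/andP: heps.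
    - rewrite addNye // mulrNy gtr0_sg ?mul1e ?addeNy //; by case/andP: heps.
  rewrite U1 in hB.
  have mB : measurable (B k : set (Borel R d)) by exact: (@meas_cball R d _).
  have mpre : measurable (Tf k @^-1` B k : set (Borel R d)).
    by rewrite -[X in measurable X]setTI; apply: mT.
  have PB0 : (0 <= P (B k))%E by exact: measure_ge0.
  have PB1 : (P (B k) <= 1)%E by exact: probability_le1.
  have PBf : P (B k) \is a fin_num by rewrite ge0_fin_numE // (le_lt_trans PB1) // ltry.
  move: PB0 PB1 hB; rewrite -(fineK PBf) !lee_fin -EFinB -EFinM -EFinD => p0 p1 hB.
  have [mN N0 _] := hNf k.
  apply: (@le_trans _ _ (mu (Tf k @^-1` B k))).
    rewrite hB lee_fin; case/andP: heps => e0 e1; nra.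
  apply: (@le_trans _ _ (mu (G k `|` Nf k))).
    rewrite le_measure ?inE //; first exact: measurableU.
    move=> x hx; case: (pselect (Nf k x)) => hxN; [by right | by left].
  apply: (@le_trans _ _ (mu (G k) + mu (Nf k))%E); last by rewrite N0 adde0.
  exact: measureU2.
pose E n : set (Borel R d) := \bigcup_(j in [set j | (n <= j)%N]) G (kf j).
have mE n : measurable (E n) by apply: bigcup_measurable => j _; exact: mG.
have Eni : nonincreasing_seq E.
  move=> n m nm; rewrite subsetEset => x [j /= hj Gx]; exists j => //.
  exact: leq_trans nm hj.
have E0fin : (mu (E 0%N) < +oo)%E.
  by apply: (le_lt_trans (probability_le1 _ (mE 0%N))); rewrite ltry.
have hcvg := nonincreasing_cvg_mu E0fin mE (bigcapT_measurable mE) Eni.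
have Ege n : (eps%:E <= mu (E n))%E.
  apply: (le_trans (Gge (kf n))); rewrite le_measure ?inE //.
  by move=> x Gx; exists n => /=.
have hlim : (eps%:E <= mu (\bigcap_n E n))%E.
  rewrite -(cvg_lim _ hcvg) //; apply: lime_ge.
    by apply/cvg_ex; eexists; exact: hcvg.
  by apply: nearW => n /=; exact: Ege.
have hsub : \bigcap_n E n `<=` (halfspace u vu : set (Borel R d)).
  move=> x hx; rewrite /halfspace /=; rewrite leNgt; apply/negP => hs.
  set z := x - u in hs *; set s := dotv vu z in hs *.
  set c := (A + 1) * l1 z + enorm (u - x).
  pose n := (Num.trunc (c / (- s))).+1.
  have [j /= hj [hBx hnN]] := hx n I.
  have hg : has_gradient (phi (kf j)) x (Tf (kf j) x).
    apply: contrapT => hng; apply: hnN; case: (hNf (kf j)) => _ _; apply; exact: hng.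
  have [sy yA] := hyf j.
  have hm := mono (proj1 (hphi (kf j))) hg sy.
  set g := Tf (kf j) x in hm hBx.
  set k := kf j in hm hBx sy yA hg.
  have gdec : g = k%:R *: vu + (g - k%:R *: vu) by rewrite addrC subrK.
  rewrite gdec dotvDl dotvZl -/z -/s in hm.
  have b1 := dot_bound (g - k%:R *: vu) z.
  have b2 := dot_bound (yf j) z.
  have l0 : 0 <= l1 z by apply: sumr_ge0 => i _.
  have hBx' : enorm (g - k%:R *: vu) <= 1 := hBx.
  have b1' : enorm (g - k%:R *: vu) * l1 z <= l1 z by rewrite ler_piMl.
  have b2' : enorm (yf j) * l1 z <= A * l1 z by rewrite ler_wpM2r // ltW.
  move: b1 b2 => /ler_normlP [b1a b1b] /ler_normlP [b2a b2b].
  have hks : k%:R * (- s) <= c by rewrite /c; lra.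
  have hnk : (n <= k)%N by apply: leq_trans hj (proj1 (hkf j)).
  have sp : 0 < - s by rewrite oppr_gt0.
  have hn : c < n%:R * (- s).
    by rewrite -ltr_pdivrMr // /n; exact: truncnS_gt.
  have : n%:R * (- s) <= k%:R * (- s).
    by apply: ler_wpM2r; [exact: ltW | rewrite ler_nat].
  lra.
have m1 : \bigcap_n E n \in measurable by rewrite inE; exact: bigcapT_measurable.
have m2 : (halfspace u vu : set (Borel R d)) \in measurable by rewrite inE; exact: meas_half.
have h : (mu (\bigcap_n E n) <= mu (halfspace u vu : set (Borel R d)))%E :=
  le_measure mu m1 m2 hsub.
rewrite hvu_argmin in h; have h2 := le_trans hlim h.
case/andP: hTD => _ /(le_lt_trans h2); rewrite ltxx //.

Qed.
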